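(* Let $\theta>1$ be real and $n$ a positive integer. Then either $M'_\theta(n)=\lfloor n/\log\theta-1/2\rfloor$ or $M'_\theta(n)=\lfloor n/\log\theta+1/2\rfloor$. Moreover, $M'_\theta(n)=\lfloor n/\log\theta+1/2\rfloor$ if and only if \[\frac12-f\!\left(\frac{\log\theta}{n}\right)\leq \left\{\frac{n}{\log\theta}\right\}<\frac12.\]
   Context: $\lfloor x\rfloor$ is the floor and $\{x\}=x-\lfloor x\rfloor$ the fractional part; $\log$ is the natural logarithm. $M'_\theta(n)=\left\lfloor 1/(\theta^{1/n}-1)\right\rfloor$. For $t>0$, $f(t)=\frac{1}{e^t-1}-\frac1t+\frac12$. *)

(* Defs.v *)
From Stdlib Require Import Reals ZArith.
Open Scope R_scope.

Definition Rfloor (x : R) : Z := Int_part x.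
Definition fracp (x : R) : R := x - IZR (Rfloor x).

Definition Mprime (theta : R) (n : nat) : Z :=
  Rfloor (1 / (Rpower theta (1 / INR n) - 1)).

Definition fT (t : R) : R := 1 / (exp t - 1) - 1 / t + 1 / 2.

(* Main.v *)
Require Import Defs.
From Stdlib Require Import Reals ZArith Lra Lia.
From Coquelicot Require Import Coquelicot.
Open Scope R_scope.

Lemma floor_uniq (y : R) (z : Z) : IZR z <= y -> y < IZR z + 1 -> Rfloor y = z.
Proof.
  intros H1 H2. unfold Rfloor, Int_part.
  assert (z + 1 = up y)%Z. { apply tech_up; rewrite plus_IZR; lra. }
  lia.
Qed.

Lemma floor_spec (y : R) : IZR (Rfloor y) <= y < IZR (Rfloor y) + 1.
Proof. unfold Rfloor. destruct (base_Int_part y). lra. Qed.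

Lemma g_pos (t : R) : 0 < t -> 0 < t * exp t + t - 2 * exp t + 2.
Proof.
  intros Ht.
  destruct (MVT_cor2 (fun s => s * exp s + s - 2 * exp s + 2)
              (fun s => s * exp s - exp s + 1) 0 t Ht) as [c [Hc1 Hc2]].
  { intros c _. apply is_derive_Reals. auto_derive; auto. ring. }
  rewrite exp_0 in Hc1.
  assert (0 < c * exp c - exp c + 1).
  { pose proof (exp_ineq1 (-c)) as E. assert (-c <> 0) by lra.
    specialize (E H). rewrite exp_Ropp in E.
    pose proof (exp_pos c).
    assert (Hm : (1 + - c) * exp c < / exp c * exp c) by (apply Rmult_lt_compat_r; lra).
    rewrite Rinv_l in Hm by lra. lra. }
  assert (0 < (c * exp c - exp c + 1) * (t - 0)) by (apply Rmult_lt_0_compat; lra).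
  lra.
Qed.

Lemma fT_bounds (t : R) : 0 < t -> 0 < fT t < 1/2.
Proof.
  intros Ht. unfold fT. pose proof (exp_ineq1 t) as E.
  assert (t <> 0) by lra. specialize (E H).
  pose proof (g_pos t Ht).
  split.
  - apply Rminus_gt_0_lt.
    replace (1 / (exp t - 1) - 1 / t + 1 / 2 - 0) with
      ((t * exp t + t - 2 * exp t + 2) / (2 * t * (exp t - 1))) by (field; lra).
    apply Rdiv_lt_0_compat; [lra|]. apply Rmult_lt_0_compat; lra.
  - apply Rminus_gt_0_lt.
    replace (1 / 2 - (1 / (exp t - 1) - 1 / t + 1 / 2)) with
      ((exp t - 1 - t) / (t * (exp t - 1))) by (field; lra).
    apply Rdiv_lt_0_compat; [lra|]. apply Rmult_lt_0_compat; lra.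
Qed.

Theorem mainTheorem9 (theta : R) (n : nat) (Htheta : 1 < theta) (Hn : (0 < n)%nat) :
  (Mprime theta n = Rfloor (INR n / ln theta - 1 / 2) \/
   Mprime theta n = Rfloor (INR n / ln theta + 1 / 2)) /\
  (Mprime theta n = Rfloor (INR n / ln theta + 1 / 2) <->
   (1 / 2 - fT (ln theta / INR n) <= fracp (INR n / ln theta) /\
    fracp (INR n / ln theta) < 1 / 2)).
Proof.
  assert (HL : 0 < ln theta) by (rewrite <- ln_1; apply ln_increasing; lra).
  assert (HN : 0 < INR n) by (apply lt_0_INR; lia).
  set (t := ln theta / INR n).
  assert (Ht : 0 < t) by (unfold t; apply Rdiv_lt_0_compat; lra).
  pose proof (fT_bounds t Ht) as Hf.
  set (x := INR n / ln theta).
  assert (HM : Mprime theta n = Rfloor (x - 1/2 + fT t)).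
  { unfold Mprime, Rpower. f_equal.
    replace (1 / INR n * ln theta) with t by (unfold t; field; lra).
    unfold fT. replace (1 / t) with x by (unfold x, t; field; lra). ring. }
  rewrite HM. unfold fracp.
  set (f := fT t) in *.
  pose proof (floor_spec x) as Hk. set (k := Rfloor x) in *.
  destruct (Rlt_le_dec (x - IZR k) (1/2 - f)) as [H1|H1].
  - assert (E1 : Rfloor (x - 1/2 + f) = (k - 1)%Z)
      by (apply floor_uniq; rewrite minus_IZR; lra).
    assert (E2 : Rfloor (x - 1/2) = (k - 1)%Z)
      by (apply floor_uniq; rewrite minus_IZR; lra).
    assert (E3 : Rfloor (x + 1/2) = k) by (apply floor_uniq; lra).
    rewrite E1, E2, E3. split; [left; reflexivity|]. split; [lia|lra].
  - destruct (Rlt_le_dec (x - IZR k) (1/2)) as [H2|H2].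
    + assert (E1 : Rfloor (x - 1/2 + f) = k) by (apply floor_uniq; lra).
      assert (E3 : Rfloor (x + 1/2) = k) by (apply floor_uniq; lra).
      rewrite E1, E3. split; [right; reflexivity|]. split; [intros; lra|reflexivity].
    + assert (E1 : Rfloor (x - 1/2 + f) = k) by (apply floor_uniq; lra).
      assert (E2 : Rfloor (x - 1/2) = k) by (apply floor_uniq; lra).
      assert (E3 : Rfloor (x + 1/2) = (k + 1)%Z)
        by (apply floor_uniq; rewrite plus_IZR; lra).
      rewrite E1, E2, E3. split; [left; reflexivity|]. split; [lia|lra].
Qed.
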